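(* Let $\mathbb{F}$ be a feature space and let $\theta$ be a function that aggregates any finite nonempty collection of elements of $\mathbb{F}$ into a single element of $\mathbb{F}$. Let $\mathcal{H}$ be a hierarchy (rooted tree) of malware binaries in which every non-leaf node $E_j$ (an exemplar) has features $F_j\in\mathbb{F}$ given by applying $\theta$ to the features of its children. Let $E_i$ be an exemplar of $\mathcal{H}$ whose descendants at depth $d_r$, $\mathbb{C}^{d_r}_i$, are re-clustered: the nodes strictly between $E_i$ and $\mathbb{C}^{d_r}_i$ are discarded and replaced by a sub-hierarchy $\mathcal{H}'$ with root $E_i$ and leaves exactly $\mathbb{C}^{d_r}_i$ (of arbitrary depth), in which the re-clustering algorithm generates the features of every exemplar (including $E_i$) by applying $\theta$ to the features of its children. Let $F_i$ be the features of $E_i$ before re-clustering and $F_i'$ its features after re-clustering. If $\theta$ is a transitive feature function (on the hierarchy both before and after the re-clustering), then $F_i = F_i'$.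
   Context: For an exemplar $E_i$ of a hierarchy, $\mathbb{C}^n_i$ denotes the set of descendants of $E_i$ at depth $n$ below $E_i$ (so $\mathbb{C}^1_i$ is its set of children), and $F_j$ denotes the features of node $E_j$ (binaries at the leaves have given features in $\mathbb{F}$). A function $\theta$ is called transitive on a hierarchy $\mathcal{H}$ if for every exemplar $E_i$ and all depths $n,m$, $\theta(F_{1,n},\dots,F_{k,n})=\theta(F_{1,m},\dots,F_{j,m})$, where $E_{1,n},\dots,E_{k,n}$ are the elements of $\mathbb{C}^n_i$ and $E_{1,m},\dots,E_{j,m}$ are the elements of $\mathbb{C}^m_i$; i.e., applying $\theta$ to the features of an exemplar's descendants at any depth gives the same result. *)

(* Defs.v *)
From mathcomp Require Import all_boot.
From Stdlib Require Export Permutation.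
Set Implicit Arguments. Unset Strict Implicit. Unset Printing Implicit Defensive.

(* Rooted (rose) trees with labelled leaves. A hierarchy of malware binaries
   is a [tree F]: leaves are binaries carrying their given features in F,
   internal nodes are exemplars. *)
Inductive tree (A : Type) : Type :=
| Leaf of A
| Node of seq (tree A).
Arguments Leaf {A} _.
Arguments Node {A} _.

Section Trees.
Variable A : Type.

Fixpoint wf (t : tree A) : bool :=
  match t with
  | Leaf _ => true
  | Node cs => (0 < size cs) && all wf cs
  end.

Fixpoint desc (n : nat) (t : tree A) : seq (tree A) :=
  match n with
  | 0 => [:: t]
  | n'.+1 => match t with
             | Leaf _ => [::]
             | Node cs => flatten (map (desc n') cs)
             end
  end.

Fixpoint subtrees (t : tree A) : seq (tree A) :=
  t :: match t with
       | Leaf _ => [::]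
       | Node cs => flatten (map subtrees cs)
       end.

Definition is_node (t : tree A) : bool :=
  if t is Node _ then true else false.

Fixpoint fringe (t : tree A) : seq A :=
  match t with
  | Leaf a => [:: a]
  | Node cs => flatten (map fringe cs)
  end.

Fixpoint uniform_depth (D : nat) (t : tree A) : bool :=
  match D, t with
  | 0, Leaf _ => true
  | D'.+1, Node cs => all (uniform_depth D') cs
  | _, _ => false
  end.

(* one-hole contexts: the position of a node inside a hierarchy *)
Inductive ctx : Type :=
| Hole
| Frame of seq (tree A) & ctx & seq (tree A).

Fixpoint plug (c : ctx) (t : tree A) : tree A :=
  match c with
  | Hole => t
  | Frame l c' r => Node (l ++ plug c' t :: r)
  end.
End Trees.

Arguments Hole {A}.

(* grafting: a skeleton whose leaves are (preserved) subtrees *)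
Fixpoint graft (A : Type) (s : tree (tree A)) : tree A :=
  match s with
  | Leaf t => t
  | Node ss => Node (map (@graft A) ss)
  end.

Section Features.
Variables (F : Type) (theta : seq F -> F).

Fixpoint feat (t : tree F) : F :=
  match t with
  | Leaf f => f
  | Node cs => theta (map feat cs)
  end.

Definition transitive_on (H : tree F) : Prop :=
  forall Ei, List.In Ei (subtrees H) -> is_node Ei ->
  forall n m, 0 < n -> 0 < m -> desc n Ei <> [::] -> desc m Ei <> [::] ->
  theta (map feat (desc n Ei)) = theta (map feat (desc m Ei)).
End Features.

(* Main.v *)
Require Import Defs.
From mathcomp Require Import all_boot.
Set Implicit Arguments.

Lemma perm_map_seq (A B : Type) (f : A -> B) (s t : seq A) :
  Permutation s t -> Permutation (map f s) (map f t).
Proof.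
elim=> //= [x l l' _ IH|x y l|l l' l'' _ IH1 _ IH2].
- by constructor.
- by constructor.
- exact: Permutation_trans IH1 IH2.
Qed.

Lemma desc1 (A : Type) (cs : seq (tree A)) : desc 1 (Node cs) = cs.
Proof. by elim: cs => //= c cs IH; rewrite IH. Qed.

Lemma desc_graft (A : Type) D (s : tree (tree A)) :
  uniform_depth D s -> desc D (graft s) = fringe s.
Proof.
elim: D s => [|D IH] [t|ss] //= H.
elim: ss H => //= x ss IHs /andP[Hx Hs].
by rewrite IH // IHs.
Qed.

Lemma fringe_ne (A : Type) D (s : tree A) :
  uniform_depth D s -> wf s -> fringe s <> [::].
Proof.
elim: D s => [|D IH] [t|ss] //= H /andP[Hs Hw].
case: ss Hs H Hw => // x ss _ /= /andP[Hx _] /andP[Wx _].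
by case E: (fringe x) (IH x Hx Wx).
Qed.

Lemma in_flat (A : Type) (x u : tree A) l :
  List.In x (subtrees u) -> List.In u l -> List.In x (flatten (map (@subtrees A) l)).
Proof.
move=> Hx; elim: l => //= a l IH [E|H]; apply: List.in_or_app; [left|right].
- by rewrite E.
- exact: IH.
Qed.

Lemma in_plug (A : Type) (C : ctx A) t : List.In t (subtrees (plug C t)).
Proof.
elim: C => [|l c IH r] /=; first by case: t => *; left.
right; apply: (@in_flat A t (plug c t) _ IH); apply: List.in_or_app; right; by left.
Qed.

Theorem theorem1 (F : Type) (theta : seq F -> F)
  (* theta aggregates a (finite, unordered) collection: order-independent *)
  (theta_coll : forall s t : seq F, Permutation s t -> theta s = theta t)
  (C : ctx F) (cs : seq (tree F)) (dr D : nat) (sk : seq (tree (tree F))) :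
  wf (plug C (Node cs)) ->
  0 < dr ->
  (* new sub-hierarchy H' : skeleton with root E_i, nonempty exemplars,
     leaves (all at common depth D) exactly the old C^dr_i *)
  wf (Node sk) ->
  uniform_depth D (Node sk) ->
  Permutation (fringe (Node sk)) (desc dr (Node cs)) ->
  transitive_on theta (plug C (Node cs)) ->
  transitive_on theta (plug C (graft (Node sk))) ->
  feat theta (Node cs) = feat theta (graft (Node sk)).
Proof.
move=> Hwf Hdr Hwk Hud Hp Ht1 Ht2.
have Hfne := @fringe_ne _ D _ Hud Hwk.
have Hdne : desc dr (Node cs) <> [::].
  by move=> E; rewrite E in Hp; apply: Hfne; apply: Permutation_nil; exact: Permutation_sym.
have Hcs : cs <> [::].
  move=> E; move: Hdne Hdr; rewrite E; by case: (dr).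
have HD : 0 < D by case: (D) Hud.
have HsK : sk <> [::] by move=> E2; move: Hwk; rewrite E2.
apply: (@eq_trans _ _ (theta (map (feat theta) (desc dr (Node cs))))).
  have -> : feat theta (Node cs) = theta (map (feat theta) (desc 1 (Node cs))) by rewrite desc1.
  apply: (Ht1 _ (in_plug C _)) => //; by rewrite desc1.
apply: (@eq_trans _ _ (theta (map (feat theta) (desc D (graft (Node sk)))))).
  rewrite (@desc_graft _ D _ Hud); apply: theta_coll; apply: perm_map_seq.
  exact: Permutation_sym.
have -> : feat theta (graft (Node sk)) =
          theta (map (feat theta) (desc 1 (graft (Node sk)))) by change (graft (Node sk)) with (Node (map (@graft F) sk)); rewrite desc1.
apply: esym; apply: (Ht2 _ (in_plug C _)) => //.
- by change (graft (Node sk)) with (Node (map (@graft F) sk)); rewrite desc1; case: (sk) HsK.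
- by rewrite (@desc_graft _ D _ Hud).
Qed.
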